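(* Fix a BS $j$ and, for each class $l\in\{1,\dots,L\}$, a measurable set $A_l$ of (nonatomic) class-$l$ mobiles associated with BS $j$, of mass $m_{lj}\ge 0$. (1) The power control subproblem of BS $j$ is feasible if and only if $\sum_{l=1}^L m_{lj}\gamma_l<1$. (2) If it is feasible, there exists a unique Pareto efficient power density $p$, given by $p(x)=\frac{\sigma^2}{h_{lj}}\,\frac{\gamma_l}{1-\sum_{l'=1}^L m_{l'j}\gamma_{l'}}$ for all $x\in A_l$, $l=1,\dots,L$.
   Context: Nonatomic uplink model: class-$l$ mobiles all have power gain $h_{lj}>0$ to BS $j$ and common target SINR density $\gamma_l>0$; receiver noise power is $\sigma^2>0$. Masses are measured by Lebesgue measure. A power density is a measurable function $p:\bigcup_l A_l\to(0,\infty)$ (integrable against the gains). The SINR density of $x\in A_l$ is $\frac{h_{lj}p(x)}{\sum_{l'}\int_{A_{l'}}h_{l'j}p(z)\,dz+\sigma^2}$. $p$ is feasible if the SINR density of every $x\in A_l$ is at least $\gamma_l$, for all $l$; the power control subproblem of BS $j$ is feasible if a feasible $p$ exists. A feasible $p$ is Pareto efficient if there is no feasible $q$ with $q\le p$ everywhere and $q<p$ on a set of positive measure. *)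

(* Defs.v *)
From HB Require Import structures.
From mathcomp Require Import all_boot all_order all_algebra.
From mathcomp Require Import all_classical all_reals all_analysis.
Set Implicit Arguments. Unset Strict Implicit. Unset Printing Implicit Defensive.
Import Order.TTheory GRing.Theory Num.Theory.
Local Open Scope classical_set_scope.
Local Open Scope ring_scope.

(* L classes indexed by 'I_L; A l = set of class-l mobiles of BS j;
   h l = h_{lj} (gain of class l to BS j); gamma l = target SINR density;
   sigma2 = noise power; mu = the measure of masses. *)
Section PowerControl.
Context {d : measure_display} {T : measurableType d} {R : realType}.
Variable mu : {measure set T -> \bar R}.
Variable L : nat.
Variables (A : 'I_L -> set T) (h gamma : 'I_L -> R) (sigma2 : R).

Definition mobiles : set T := \bigcup_(l in [set: 'I_L]) A l.

Definition interference (p : T -> R) : R :=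
  \sum_(l < L) h l * Rintegral mu (A l) p.

Definition sinr (l : 'I_L) (p : T -> R) (x : T) : R :=
  h l * p x / (interference p + sigma2).

Definition power_density (p : T -> R) : Prop :=
  [/\ measurable_fun mobiles p,
      (forall x, mobiles x -> 0 < p x) &
      (forall l, mu.-integrable (A l) (EFin \o p))].

Definition feasible (p : T -> R) : Prop :=
  power_density p /\ (forall l x, A l x -> gamma l <= sinr l p x).

Definition subproblem_feasible : Prop := exists p, feasible p.

Definition pareto_efficient (p : T -> R) : Prop :=
  feasible p /\
  ~ (exists q, [/\ feasible q,
                   (forall x, mobiles x -> q x <= p x) &
                   (0 < mu [set x | mobiles x /\ (q x < p x)%R])%E]).

End PowerControl.

(* Main.v *)
Require Import Defs.
From HB Require Import structures.
From mathcomp Require Import all_boot all_order all_algebra.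
From mathcomp Require Import all_classical all_reals all_analysis.
From mathcomp Require Import ring lra.
Import Order.TTheory GRing.Theory Num.Theory.
Local Open Scope classical_set_scope.
Local Open Scope ring_scope.

Lemma aux1 (R : realFieldType) (I s : R) : 0 <= I -> 0 < s -> 0 < I + s.
Proof. move=> *; lra. Qed.
Lemma aux2 (R : realFieldType) (S I s : R) : 0 <= I -> 0 < s -> S * (I + s) <= I -> S < 1.
Proof. move=> h1 h2 h3; rewrite ltNge; apply/negP => h4; nra. Qed.
Lemma aux3 (R : realFieldType) (S I s : R) : S * (I + s) <= I -> s <= (I + s) * (1 - S).
Proof. move=> *; nra. Qed.

Section Proofs.
Context (d : measure_display) (T : measurableType d) (R : realType)
  (mu : {measure set T -> \bar R}) (L : nat)
  (A : 'I_L -> set T) (m h gamma : 'I_L -> R) (sigma2 : R)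
  (hA : forall l, measurable (A l))
  (hdisj : forall l l', l != l' -> A l `&` A l' = set0)
  (hm : forall l, mu (A l) = (m l)%:E)
  (hh : forall l, 0 < h l) (hgamma : forall l, 0 < gamma l)
  (hsigma : 0 < sigma2).

Let S := \sum_(l < L) m l * gamma l.
Let c l := sigma2 / h l * (gamma l / (1 - S)).

Lemma mobilesP x : mobiles A x <-> exists l, A l x.
Proof. by split=> [[l _ Ax]|[l Ax]]; exists l. Qed.

Lemma mobiles_meas : measurable (mobiles A).
Proof. by apply: fin_bigcup_measurable => //; exact: finite_finset. Qed.

Lemma integrable_cstA l k : mu.-integrable (A l) (EFin \o cst k).
Proof.
apply/integrableP; split; first by have -> : EFin \o cst k = cst k%:E :> (T -> \bar R) by []; exact: measurable_cst.
rewrite (eq_integral (cst `|k|%:E)); last by [].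
by rewrite integral_cst // hm -EFinM ltry.
Qed.

Lemma key_bound q : feasible mu A h gamma sigma2 q ->
  S < 1 /\ forall l x, A l x -> c l <= q x.
Proof.
move=> [[mq qpos qint] hs].
set I := interference mu A h q.
have I0 : 0 <= I.
  apply: sumr_ge0 => l _; apply: mulr_ge0; first exact: ltW.
  apply: Rintegral_ge0 => x Ax; apply: ltW; apply: qpos; by apply/mobilesP; exists l.
have Ipos : 0 < I + sigma2 by exact: aux1.
have lower : forall l x, A l x -> gamma l * (I + sigma2) / h l <= q x.
  move=> l x Ax; have := hs l x Ax; rewrite /sinr -/I ler_pdivlMr // => H.
  by rewrite ler_pdivrMr // [q x * _]mulrC.
have intl : forall l, m l * gamma l * (I + sigma2) <= h l * Rintegral mu (A l) q.
  move=> l; have := le_Rintegral (hA l) (integrable_cstA l (gamma l * (I + sigma2) / h l)) (qint l) (lower l).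
  rewrite Rintegral_cst // hm /= => H.
  have e : m l * gamma l * (I + sigma2) = h l * (gamma l * (I + sigma2) / h l * m l).
    by field; apply/lt0r_neq0.
  by rewrite e ler_wpM2l //; exact: ltW.
have sumI : S * (I + sigma2) <= I.
  by rewrite /S mulr_suml; apply: ler_sum => l _; exact: intl.
have S1 : S < 1 by exact: aux2 I0 hsigma sumI.
split => // l x Ax; apply: le_trans (lower l x Ax).
have hS : sigma2 / (1 - S) <= I + sigma2.
  by rewrite ler_pdivrMr ?subr_gt0 //; exact: aux3.
have e1 : c l = gamma l / h l * (sigma2 / (1 - S)).
  rewrite /c; field; apply/andP; split; [rewrite subr_eq0 gt_eqF // | apply/lt0r_neq0 => //].
have e2 : gamma l * (I + sigma2) / h l = gamma l / h l * (I + sigma2) by ring.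
rewrite e1 e2 ler_wpM2l //; apply: ltW; exact: divr_gt0.
Qed.

Lemma c_gt0 l : S < 1 -> 0 < c l.
Proof.
move=> S1; apply: mulr_gt0; apply: divr_gt0 => //; by rewrite subr_gt0.
Qed.

Lemma pstar_feasible p : S < 1 -> (forall l x, A l x -> p x = c l) ->
  feasible mu A h gamma sigma2 p.
Proof.
move=> S1 hp; split; first split.
- move=> _ Y mY.
  rewrite (_ : mobiles A `&` p @^-1` Y = \bigcup_(l in setT) (A l `&` p @^-1` Y)).
    apply: fin_bigcup_measurable; first exact: finite_finset.
    move=> l _; case: (pselect (Y (c l))) => Yc.
      rewrite (_ : _ `&` _ = A l) //; apply/seteqP; split=> x /=; first by case.
      by move=> Ax; split => //; rewrite /preimage /= (hp l x Ax).
    rewrite (_ : _ `&` _ = set0) //; apply/seteqP; split=> x /=; last by [].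
    by move=> [Ax]; rewrite /preimage /= (hp l x Ax).
  apply/seteqP; split=> x /=.
    by move=> [[l _ Ax] Ypx]; exists l.
  by move=> [l _ [Ax Ypx]]; split => //; exists l.
- by move=> x /mobilesP [l Ax]; rewrite (hp l x Ax); exact: c_gt0.
- move=> l; apply: (eq_integrable (hA l) _ _ _ (integrable_cstA l (c l))).
  by move=> x /set_mem Ax; rewrite /= (hp l x Ax).
- move=> l x Ax.
  have hI : interference mu A h p = sigma2 / (1 - S) * S.
    rewrite /interference /S mulr_sumr; apply: eq_bigr => l' _.
    rewrite (@eq_Rintegral _ _ _ mu (A l') (fun _ => c l')); last by move=> y /set_mem Ay; rewrite (hp l' y Ay).
    rewrite Rintegral_cst // hm /= /c -/S; field.
    apply/andP; split; [rewrite subr_eq0 gt_eqF // | apply/lt0r_neq0 => //].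
  have hD : sigma2 / (1 - S) * S + sigma2 = sigma2 / (1 - S).
    by field; rewrite subr_eq0 gt_eqF.
  rewrite /sinr hI hD (hp l x Ax) /c.
  rewrite le_eqVlt; apply/orP; left; apply/eqP; field.
  by rewrite subr_eq0 gt_eqF // !lt0r_neq0.
Qed.

End Proofs.

Arguments mobilesP {d T L A x}.
Arguments mobiles_meas {d T L A}.
Theorem proposition7 (d : measure_display) (T : measurableType d) (R : realType)
  (mu : {measure set T -> \bar R}) (L : nat)
  (A : 'I_L -> set T) (m h gamma : 'I_L -> R) (sigma2 : R)
  (hA : forall l, measurable (A l))
  (hdisj : forall l l', l != l' -> A l `&` A l' = set0)
  (hm : forall l, mu (A l) = (m l)%:E)
  (hh : forall l, 0 < h l) (hgamma : forall l, 0 < gamma l)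
  (hsigma : 0 < sigma2) :
  (subproblem_feasible mu A h gamma sigma2 <-> \sum_(l < L) m l * gamma l < 1) /\
  (\sum_(l < L) m l * gamma l < 1 ->
   forall pstar : T -> R,
     (forall l x, A l x ->
        pstar x = sigma2 / h l * (gamma l / (1 - \sum_(l' < L) m l' * gamma l'))) ->
     pareto_efficient mu A h gamma sigma2 pstar /\
     (forall p, pareto_efficient mu A h gamma sigma2 p ->
        {ae mu, forall x, mobiles A x -> p x = pstar x})).
Proof.
set S := \sum_(l < L) m l * gamma l.
set c := fun l => sigma2 / h l * (gamma l / (1 - S)).
have KB := @key_bound _ _ _ _ _ _ _ _ _ _ hA hm hh hgamma hsigma.
have PF := @pstar_feasible _ _ _ _ _ _ _ _ _ _ hA hm hh hgamma hsigma.
split.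
  split; first by move=> [p fp]; exact: (KB p fp).1.
  move=> S1; exists (fun x => \sum_(l < L) (if `[< A l x >] then c l else 0)).
  apply: PF => // l x Ax.
  rewrite (bigD1 l) //= asboolT // big1 ?addr0 // => l' nl'.
  case: ifP => //; move/asboolP => Al'x.
  have : (A l' `&` A l) x by [].
  by rewrite hdisj.
move=> S1 pstar hp; split.
  split; first exact: PF.
  move=> [q [fq qle qpos]]; have [_ lb] := KB q fq.
  move: qpos; rewrite (_ : [set x | _ /\ _] = set0) ?measure0 ?ltxx //.
  apply/seteqP; split => x //= [/mobilesP [l Ax] qlt].
  by move: qlt; rewrite (hp l x Ax) ltNge lb.
move=> p [fp np]; have [_ lb] := KB p fp.
have [mp _ _] := fp.1.
set N := \bigcup_(l in setT) (A l `&` [set x | c l < p x]).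
have mN : measurable N.
  apply: fin_bigcup_measurable; first exact: finite_finset.
  move=> l _; have := mp (mobiles_meas hA) _ (measurable_itv `]c l, +oo[).
  move/(measurableI _ _ (hA l)).
  rewrite (_ : A l `&` _ = A l `&` [set x | c l < p x]) //.
  apply/seteqP; split => x /=.
    by move=> [Ax [_]]; rewrite /preimage /= in_itv /= andbT.
  move=> [Ax cp]; split => //; split; first by apply/mobilesP; exists l.
  by rewrite /preimage /= in_itv /= andbT.
have N0 : mu N = 0%E.
  apply/eqP; rewrite eq_le measure_ge0 andbT leNgt; apply/negP => Npos.
  apply: np; exists pstar; split.
  - exact: PF.
  - by move=> x /mobilesP [l Ax]; rewrite (hp l x Ax); exact: lb.
  - rewrite (_ : [set x | _ /\ _] = N) //; apply/seteqP; split => x /=.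
      by move=> [/mobilesP [l Ax]]; rewrite (hp l x Ax) => cp; exists l.
    by move=> [l _ [Ax cp]]; split; [apply/mobilesP; exists l | rewrite (hp l x Ax)].
exists N; split => // x /= nx.
case: (pselect (mobiles A x)) => mx; last by exfalso; apply: nx.
move/mobilesP: (mx) => [l Ax]; exists l => //; split => //.
rewrite /=. rewrite lt_neqAle lb // andbT; apply/negP => /eqP e.
by apply: nx => _; rewrite (hp l x Ax) -e.
Qed.
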